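(* Assume there is $\xi>0$ such that $\|\mathbf{n}\cdot\nabla|\phi(\theta)\rangle\|_2\le\xi$ for all $\theta\in\mathbb{R}^K$ and all unit vectors $\mathbf{n}\in\mathbb{R}^K$. Suppose the guiding function $\alpha$ is parameterised by a rectifier neural network with one hidden layer of $L\ge 2K$ neurons, with $W(A)=e^{-A}$ and prior guiding function $F(\theta)=1$. Then for every $\theta\in\mathbb{R}^K$ and every $x<1$, $$\inf_{|\widetilde\psi(\lambda)\rangle\in\mathcal{V}_x}\big\||\widetilde\psi(\lambda)\rangle-|\phi(\theta)\rangle\big\|_2=0 .$$
   Context: Fix $n$ qubits, $\mathcal{H}=(\mathbb{C}^2)^{\otimes n}$, and a parameterised circuit with normalised states $|\phi(\theta)\rangle=U(\theta)|0\rangle^{\otimes n}$, $U(\theta)$ unitary, defined and differentiable for all $\theta\in\Theta=\mathbb{R}^K$; $\|\cdot\|_2$ is the Euclidean norm on $\mathcal{H}$. Rectifier network: with $\mathrm{ReLU}(z)=\max\{0,z\}$ applied componentwise, for input $\theta\in\mathbb{R}^K$ set $h=\mathrm{ReLU}(w\theta+b)\in\mathbb{R}^L$, $A=w_A\cdot h+b_A$, $B=w_B\cdot h+b_B$, where $w\in\mathbb{R}^{L\times K}$, $b,w_A,w_B\in\mathbb{R}^L$, $b_A,b_B\in\mathbb{R}$; $\lambda=(w,b,w_A,b_A,w_B,b_B)\in\Lambda=\mathbb{R}^{KL+3L+2}$. The guiding function is $\alpha(\theta;\lambda)=W(A)e^{iB}F(\theta)$ with a non-negative function $W$ and a prior guiding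 function $F$. Variational state: for $\lambda$ with $C(\lambda)=\int|\alpha(\theta;\lambda)|d\theta$ finite and positive, $|\psi(\lambda)\rangle=C(\lambda)^{-1}\int\alpha(\theta;\lambda)|\phi(\theta)\rangle\,d\theta$, $\langle \mathbb{1}\rangle(\lambda)=\langle\psi(\lambda)|\psi(\lambda)\rangle$, and $|\widetilde\psi(\lambda)\rangle=|\psi(\lambda)\rangle/\sqrt{\langle \mathbb{1}\rangle(\lambda)}$. For a real $x$, $\mathcal{V}_x=\{|\widetilde\psi(\lambda)\rangle:\lambda\in\Lambda,\ \langle \mathbb{1}\rangle(\lambda)\ge x\}$. *)

(* Defs.v *)
From HB Require Import structures.
From mathcomp Require Import all_boot all_order all_algebra.
From mathcomp Require Import all_classical all_reals all_analysis.
From mathcomp Require Import complex.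
Set Implicit Arguments. Unset Strict Implicit. Unset Printing Implicit Defensive.
Import Order.TTheory GRing.Theory Num.Theory.
Import numFieldNormedType.Exports.
Local Open Scope classical_set_scope.
Local Open Scope ring_scope.

Section Defs.
Variable R : realType.
Local Notation C := R[i].

Fixpoint integral_RK (K : nat) : ('rV[R]_K -> \bar R) -> \bar R :=
  match K return ('rV[R]_K -> \bar R) -> \bar R with
  | 0 => fun f => f 0
  | K'.+1 => fun f =>
      (\int[@lebesgue_measure R]_t
         integral_RK (fun v : 'rV[R]_K' => f (row_mx (const_mx t : 'rV[R]_1) v)))%E
  end.

Definition cmod (z : C) : R := Num.sqrt (complex.Re z ^+ 2 + complex.Im z ^+ 2).

Definition hnorm (N : nat) (v : 'cV[C]_N) : R :=
  Num.sqrt (\sum_(j < N) cmod (v j 0) ^+ 2).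

Definition rnorm (K : nat) (v : 'rV[R]_K) : R :=
  Num.sqrt (\sum_(k < K) v 0 k ^+ 2).

(* |0>^{\otimes n} : the first computational basis vector of C^(2^n) *)
Definition ket0 (n : nat) : 'cV[C]_(2 ^ n) :=
  \col_(j < 2 ^ n) (if (j : nat) == 0%N then 1 else 0).

Definition adjoint (N : nat) (M : 'M[C]_N) : 'M[C]_N :=
  \matrix_(i, j) (M j i)^*.

Definition unitary (N : nat) (M : 'M[C]_N) : Prop := adjoint M *m M = 1%:M.

Definition ddir (K N : nat) (f : 'rV[R]_K -> 'cV[C]_N) (v : 'rV[R]_K)
  (theta : 'rV[R]_K) : 'cV[C]_N :=
  \col_(j < N) ('D_v (fun t => complex.Re (f t j 0)) theta
                +i* 'D_v (fun t => complex.Im (f t j 0)) theta)%C.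

Definition relu (z : R) : R := Num.max 0 z.

Definition hidden (K L : nat) (w : 'M[R]_(L, K)) (b : 'cV[R]_L)
  (theta : 'rV[R]_K) : 'cV[R]_L :=
  map_mx relu (w *m theta^T + b).

Definition outA (K L : nat) (w : 'M[R]_(L, K)) (b wA : 'cV[R]_L) (bA : R)
  (theta : 'rV[R]_K) : R :=
  \sum_(l < L) wA l 0 * hidden w b theta l 0 + bA.

(* network parameters lambda = (w, b, w_A, b_A, w_B, b_B) in R^{KL+3L+2} *)
Record netparam (K L : nat) := NetParam {
  np_w : 'M[R]_(L, K); np_b : 'cV[R]_L;
  np_wA : 'cV[R]_L; np_bA : R; np_wB : 'cV[R]_L; np_bB : R }.

Definition netA K L (p : netparam K L) (theta : 'rV[R]_K) : R :=
  outA (np_w p) (np_b p) (np_wA p) (np_bA p) theta.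
Definition netB K L (p : netparam K L) (theta : 'rV[R]_K) : R :=
  outA (np_w p) (np_b p) (np_wB p) (np_bB p) theta.

(* guiding function alpha = W(A) e^{iB} F(theta), with W(A) = e^{-A}, F = 1 *)
Definition alpha K L (p : netparam K L) (theta : 'rV[R]_K) : C :=
  ((expR (- netA p theta))%:C)%C * (cos (netB p theta) +i* sin (netB p theta))%C * 1.

Definition normconst K L (p : netparam K L) : \bar R :=
  integral_RK (fun theta => (cmod (alpha p theta))%:E).

Definition psi n K L (phi : 'rV[R]_K -> 'cV[C]_(2 ^ n)) (p : netparam K L)
  : 'cV[C]_(2 ^ n) :=
  \col_(j < 2 ^ n)
    ((((fine (normconst p))^-1)%:C)%C *
    (fine (integral_RK (fun theta => (complex.Re (alpha p theta * phi theta j 0))%:E))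
     +i* fine (integral_RK (fun theta => (complex.Im (alpha p theta * phi theta j 0))%:E)))%C).

Definition expect1 n K L (phi : 'rV[R]_K -> 'cV[C]_(2 ^ n)) (p : netparam K L) : R :=
  hnorm (psi phi p) ^+ 2.

Definition psin n K L (phi : 'rV[R]_K -> 'cV[C]_(2 ^ n)) (p : netparam K L)
  : 'cV[C]_(2 ^ n) :=
  (((Num.sqrt (expect1 phi p))^-1)%:C)%C *: psi phi p.

(* lambda gives an element of V_x: C(lambda) finite and positive (so psi is
   defined), <1>(lambda) > 0 (so psi~ is defined) and <1>(lambda) >= x *)
Definition in_Vx n K L (phi : 'rV[R]_K -> 'cV[C]_(2 ^ n)) (x : R)
  (p : netparam K L) : Prop :=
  (0 < normconst p < +oo)%E /\ 0 < expect1 phi p /\ x <= expect1 phi p.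

End Defs.

(* Main.v *)
Require Import Defs.
From HB Require Import structures.
From mathcomp Require Import all_boot all_order all_algebra.
From mathcomp Require Import all_classical all_reals all_analysis.
From mathcomp Require Import complex.
From mathcomp Require Import measurable_realfun.
From mathcomp Require Import zify.
Import Order.TTheory GRing.Theory Num.Theory.
Import numFieldNormedType.Exports.
Local Open Scope classical_set_scope.
Local Open Scope ring_scope.
Set Implicit Arguments. Unset Strict Implicit. Unset Printing Implicit Defensive.
From mathcomp Require Import ring lra.
Section P1.
Variable R : realType.
Local Open Scope ereal_scope.

Lemma le_integralT_any (f g : R -> \bar R) : (forall x, f x <= g x) ->
  \int[@lebesgue_measure R]_x f x <= \int[@lebesgue_measure R]_x g x.
Proof.
move=> fg; rewrite /integral.
apply: leeB.
  apply: le_ereal_sup; move=> y [h hf <-]; exists h => //= x.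
  apply: (le_trans (hf x)).
  rewrite !patch_setT.
  by rewrite !funeposE ge_max !le_max fg lexx !orbT.
apply: le_ereal_sup; move=> y [h hf <-]; exists h => //= x.
apply: (le_trans (hf x)).
rewrite !patch_setT.
by rewrite !funenegE ge_max !le_max leeN2 fg lexx !orbT.
Qed.
End P1.
Section P2.
Variable R : realType.
Local Notation mu := (@lebesgue_measure R).

Lemma cont_expabs (s c : R) : continuous (fun x : R => expR (- (s * `|x - c|))).
Proof.
move=> x; apply: continuous_comp; last exact: continuous_expR.
apply: (@continuousN _ R^o).
apply: (@continuousM _ R^o (fun=> s)); first exact: cst_continuous.
apply: continuous_comp; last exact: norm_continuous.
by move=> y; apply: cvgB; [exact: cvg_id|exact: cvg_cst].
Qed.

Local Open Scope ereal_scope.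

Lemma int_exp_half (s : R) : (0 < s)%R ->
  \int[mu]_(x in [set x : R | (0 <= x)%R]) (expR (- (s * `|x|)))%:E = (s^-1)%:E.
Proof.
move=> s0.
have D0 : [set x : R | (0 <= x)%R] = `[0%R, +oo[%classic by rewrite set_itvcy.
transitivity (\int[mu]_(x in [set x : R | (0 <= x)%R]) ((s^-1)%:E * (exponential_pdf s x)%:E)).
  apply: eq_integral => x; rewrite inE /= => x0.
  rewrite exponential_pdfE // -EFinM; congr EFin.
  by rewrite mulrA mulVf ?gt_eqF // mul1r ger0_norm // mulNr.
rewrite ge0_integralZl_EFin //.
- rewrite -[RHS]mule1; congr (_ * _).
  rewrite -(integral_exponential_pdf s0) integral_mkcond; apply: eq_integral => x _.
  rewrite patchE; case: ifPn => //; rewrite notin_setE /= => /negP; rewrite -ltNge => x0.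
  by rewrite lt0_exponential_pdf.
- by rewrite D0; exact: measurable_itv.
- by move=> x _; rewrite lee_fin exponential_pdf_ge0 // ltW.
- by apply/measurable_EFinP; apply: measurable_funTS; exact: measurable_exponential_pdf.
- by rewrite invr_ge0 ltW.
Qed.

Lemma int_exp_abs0 (s : R) : (0 < s)%R ->
  \int[mu]_x (expR (- (s * `|x|)))%:E = (2 / s)%:E.
Proof.
move=> s0.
have := @ge0_symfun_integralT R (fun x => expR (- (s * `|x|))).
move=> ->.
- by rewrite int_exp_half // -EFinM mulr_natl mul1r.
- by move=> x; rewrite expR_ge0.
- have := @cont_expabs s 0; by under eq_fun do rewrite subr0.
- by move=> x /=; rewrite normrN.
Qed.
End P2.
Section P3.
Variable R : realType.
Local Notation mu := (@lebesgue_measure R).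
Local Open Scope ereal_scope.

Lemma int_exp_abs (s c : R) : (0 < s)%R ->
  \int[mu]_x (expR (- (s * `|x - c|)))%:E = (2 / s)%:E.
Proof.
move=> s0.
have dF : (fun x : R => x + c)%R^`()%classic = cst 1%R.
  apply/funext => x; rewrite derive1E /= deriveD //= derive_id derive_cst addr0 //.
rewrite (@increasing_ge0_integration_by_substitutionT R (fun x => x + c)%R) //.
- rewrite -(int_exp_abs0 s0); apply: eq_integral => x _.
  by rewrite dF /= !fctE /= mulr1 addrK.
- by move=> x y xy; rewrite ltrD2r.
- by rewrite dF; exact: cst_continuous.
- by rewrite dF; exact: is_cvg_cst.
- by rewrite dF; exact: is_cvg_cst.
- exact: cvg_addrr_Ny.
- exact: cvg_addrr.
- exact: cont_expabs.
Qed.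

End P3.
Section P4.
Variable R : realType.
Local Notation mu := (@lebesgue_measure R).
Local Open Scope ereal_scope.

Lemma integrable_exp_abs (s c : R) : (0 < s)%R ->
  mu.-integrable setT (fun x => (expR (- (s * `|x - c|)))%:E).
Proof.
move=> s0; apply/integrableP; split.
  apply/measurable_EFinP; apply: continuous_measurable_fun; exact: cont_expabs.
under eq_integral do rewrite /= ger0_norm ?expR_ge0//.
by rewrite int_exp_abs // ltry.
Qed.

Lemma int_exp2 (p q s t c : R) : (0 < s)%R -> (0 < t)%R ->
  \int[mu]_x ((p * expR (- (s * `|x - c|)) + q * expR (- (t * `|x - c|)))%R)%:E
  = (p * (2 / s) + q * (2 / t))%:E.
Proof.
move=> s0 t0.
under eq_integral do rewrite EFinD !EFinM.
rewrite integralD //; last 2 first.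
- by apply: integrableZl => //; exact: integrable_exp_abs.
- by apply: integrableZl => //; exact: integrable_exp_abs.
rewrite !integralZl //; last 2 first.
- exact: integrable_exp_abs.
- exact: integrable_exp_abs.
by rewrite !int_exp_abs.
Qed.
End P4.
Section P5.
Variable R : realType.
Local Notation mu := (@lebesgue_measure R).

Definition Dsum K (c t : 'rV[R]_K) : R := \sum_(k < K) `|t 0 k - c 0 k|.
Definition Edens K (s : R) (c t : 'rV[R]_K) : R := expR (- (s * Dsum c t)).

Lemma integral_RK_le K (f g : 'rV[R]_K -> \bar R) :
  (forall t, (f t <= g t)%E) -> (integral_RK f <= integral_RK g)%E.
Proof.
elim: K f g => [|K IH] f g fg /=; first exact: fg.
by apply: le_integralT_any => x; apply: IH => v; exact: fg.
Qed.

Lemma row_mx_0 K (x : R) (v : 'rV[R]_K) :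
  (row_mx (const_mx x : 'rV_1) v : 'rV_(K.+1)) 0 ord0 = x.
Proof. by rewrite mxE; case: splitP => [j _|j /= hj]; [rewrite mxE|]. Qed.

Lemma row_mx_S K (x : R) (v : 'rV[R]_K) i :
  (row_mx (const_mx x : 'rV_1) v : 'rV_(K.+1)) 0 (lift ord0 i) = v 0 i.
Proof.
rewrite mxE; case: splitP => [j /= hj|j /= hj].
  by move: (ltn_ord j); rewrite -hj /bump /=.
by congr (v 0 _); apply: val_inj; move: hj; rewrite /bump /= add1n => -[].
Qed.

Lemma Dsum_row K (c : 'rV[R]_K.+1) (x : R) (v : 'rV[R]_K) :
  Dsum c (row_mx (const_mx x : 'rV_1) v) =
  `|x - c 0 0| + Dsum (\row_(i < K) c 0 (lift ord0 i)) v.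
Proof.
rewrite /Dsum big_ord_recl row_mx_0; congr (_ + _).
by apply: eq_bigr => i _; rewrite row_mx_S mxE.
Qed.

Lemma integral_RK_exp2 K (c : 'rV[R]_K) (p q s t : R) : 0 < s -> 0 < t ->
  integral_RK (fun v => ((p * Edens s c v + q * Edens t c v))%:E)
  = (p * (2 / s) ^+ K + q * (2 / t) ^+ K)%:E.
Proof.
move=> s0 t0.
elim: K c p q => [|K IH] c p q /=.
  by rewrite /Edens /Dsum big_ord0 !mulr0 !oppr0 !expR0 !mulr1.
pose c' := \row_(i < K) c 0 (lift ord0 i).
under eq_integral => x _.
  have -> : (fun v : 'rV_K => (p * Edens s c (row_mx (const_mx x : 'rV_1) v) +
         q * Edens t c (row_mx (const_mx x : 'rV_1) v))%:E) =
     (fun v => ((p * expR (- (s * `|x - c 0 0|))) * Edens s c' v +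
                (q * expR (- (t * `|x - c 0 0|))) * Edens t c' v)%:E).
    by apply/funext => v; rewrite /Edens Dsum_row !mulrDr !opprD !expRD !mulrA.
  rewrite IH.
  rewrite -!mulrA [_ * (2 / s) ^+ K]mulrC [_ * (2 / t) ^+ K]mulrC !mulrA.
  over.
rewrite int_exp2 //.
by rewrite -!mulrA -!exprSr.
Qed.
End P5.
Section P6.
Variable R : realType.

Lemma rnorm_ge0 K (v : 'rV[R]_K) : 0 <= rnorm v.
Proof. exact: sqrtr_ge0. Qed.

Lemma rnormZ K (a : R) (v : 'rV[R]_K) : rnorm (a *: v) = `|a| * rnorm v.
Proof.
rewrite /rnorm -sqrtr_sqr -sqrtrM ?sqr_ge0 //; congr Num.sqrt.
rewrite mulr_sumr; apply: eq_bigr => k _; by rewrite mxE exprMn.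
Qed.

Lemma rnorm_eq0 K (v : 'rV[R]_K) : rnorm v = 0 -> v = 0.
Proof.
move=> /eqP; rewrite /rnorm sqrtr_eq0 => h.
have h0 : \sum_(k < K) v 0 k ^+ 2 = 0.
  by apply/eqP; rewrite eq_le h /= sumr_ge0 // => k _; exact: sqr_ge0.
move/eqP: h0; rewrite psumr_eq0 => [/allP hk|k _]; last exact: sqr_ge0.
apply/matrixP => i k; rewrite ord1 mxE.
by have := hk k (mem_index_enum k); rewrite /= sqrf_eq0 => /eqP.
Qed.

Lemma line_quot K (f : 'rV[R]_K -> R) (c u : 'rV[R]_K) (z : R) :
  (fun h : R => h^-1 *: (((fun t : R => f (c + t *: u)) \o shift z) (h *: 1)
       - (fun t : R => f (c + t *: u)) z)) =
  (fun h : R => h^-1 *: ((f \o shift (c + z *: u)) (h *: u) - f (c + z *: u))).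
Proof.
apply/funext => h /=; congr (_ *: (f _ - _)).
by rewrite [h%:A]mulr1 scalerDl addrCA addrA.
Qed.

Lemma lipschitz_dir K (f : 'rV[R]_K -> R) (xi : R) :
  (forall x, differentiable f x) ->
  (forall x nv, rnorm nv = 1 -> `|'D_nv f x| <= xi) ->
  forall t c, `|f t - f c| <= xi * rnorm (t - c).
Proof.
move=> df hD t c.
have [r0|rpos] := eqVneq (rnorm (t - c)) 0.
  move/rnorm_eq0/eqP: r0; rewrite subr_eq0 => /eqP ->.
  by rewrite subrr normr0 subrr /rnorm big1 ?sqrtr0 ?mulr0 // => k _; rewrite mxE expr0n.
have rp : 0 < rnorm (t - c) by rewrite lt_def rpos rnorm_ge0.
set r := rnorm (t - c) in rp rpos *.
set u := r^-1 *: (t - c).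
have u1 : rnorm u = 1 by rewrite rnormZ ger0_norm ?invr_ge0 ?ltW // mulVf.
set g := fun s : R => f (c + s *: u).
have dg : forall z, derivable g z 1.
  move=> z; rewrite /derivable /g line_quot.
  exact: diff_derivable.
have Dg : forall z, 'D_1 g z = 'D_u f (c + z *: u).
  by move=> z; rewrite /derive /g line_quot.
have [z _ hz] := @MVT R g (fun z => 'D_1 g z) 0 r rp
  (fun z _ => derivableP (dg z))
  (derivable_within_continuous (fun z _ => dg z)).
have -> : f t - f c = g r - g 0.
  by rewrite /g /u scale0r addr0 scalerA mulfV // scale1r [c + _]addrC subrK.
rewrite hz subr0 normrM [`|r|]ger0_norm ?(ltW rp) //.
by rewrite ler_pM2r // Dg hD.
Qed.
End P6.
Section P7.
Variable R : realType.

Definition dnet K (u : 'rV[R]_K) (i : nat) : R :=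
  \sum_(k < K) (((i == k)%:R - (i == K + k)%:R) * u 0 k).

Lemma dnet_lt K (u : 'rV[R]_K) (i : 'I_K) : dnet u i = u 0 i.
Proof.
rewrite /dnet (bigD1 i) //= eqxx.
have -> : ((i : nat) == K + i)%N = false.
  by apply/negbTE; rewrite neq_ltn; apply/orP; left; rewrite ltn_addr.
rewrite subr0 mul1r big1 ?addr0 // => k /negbTE ki.
have -> : ((i : nat) == k) = false by rewrite eq_sym; move: ki; rewrite -val_eqE.
have -> : ((i : nat) == K + k)%N = false.
  by apply/negbTE; rewrite neq_ltn ltn_addr.
by rewrite subrr mul0r.
Qed.

Lemma dnet_mid K (u : 'rV[R]_K) (i : 'I_K) : dnet u (i + K) = - u 0 i.
Proof.
rewrite /dnet (bigD1 i) //= [(i + K)%N]addnC eqxx.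
have -> : (K + i == i)%N = false.
  by apply/negbTE/eqP; move: (ltn_ord i); lia.
rewrite sub0r mulN1r big1 ?addr0 // => k /negbTE ki.
have -> : (K + i == k)%N = false.
  by apply/negbTE/eqP; move: (ltn_ord k); lia.
have -> : (K + i == K + k)%N = false by rewrite eqn_add2l; move: ki; rewrite -val_eqE eq_sym.
by rewrite subrr mul0r.
Qed.

Lemma dnet_hi K (u : 'rV[R]_K) (i : nat) : (2 * K <= i)%N -> dnet u i = 0.
Proof.
move=> hi; rewrite /dnet big1 // => k _.
have -> : (i == k)%N = false.
  apply/negbTE; rewrite neq_ltn; apply/orP; right.
  by apply: (leq_trans (ltn_ord k)); apply: leq_trans hi; rewrite mul2n -addnn leq_addr.
have -> : (i == K + k)%N = false.
  apply/negbTE; rewrite neq_ltn; apply/orP; right.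
  by apply: leq_trans hi; rewrite mul2n -addnn ltn_add2l.
by rewrite subrr mul0r.
Qed.

Lemma sum_relu_dnet K L (u : 'rV[R]_K) : (2 * K <= L)%N ->
  \sum_(l < L) relu (dnet u l) = \sum_(k < K) `|u 0 k|.
Proof.
move=> HL.
rewrite -(big_mkord xpredT (fun l => relu (dnet u l))).
have K2 : (K <= 2 * K)%N by rewrite mul2n -addnn leq_addr.
rewrite (@big_cat_nat _ _ _ K 0 L) //=; last exact: leq_trans K2 HL.
rewrite (@big_cat_nat _ _ _ (2 * K) K L) //=.
rewrite [X in _ + (_ + X)]big1_seq ?addr0; last first.
  move=> i /andP[_]; rewrite mem_index_iota => /andP[hi _].
  by rewrite dnet_hi // /relu /Order.max ltxx.
have E : forall F : nat -> R, \sum_(K <= i < 2 * K) F i = \sum_(0 <= i < K) F (i + K)%N.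
  by move=> F; rewrite -{1}(add0n K) big_addn mul2n -addnn addnK.
rewrite E.
rewrite !big_mkord -big_split /=; apply: eq_bigr => i _.
rewrite dnet_lt dnet_mid /relu.
case: (leP 0 (u 0 i)) => h.
  rewrite ger0_norm // maxEle oppr_ge0 -[u 0 i <= 0]negbK -ltNge.
  case: (ltP 0 (u 0 i)) => h' /=.
  - exact: addr0.
  - have u0 : u 0 i = 0 by apply/eqP; rewrite eq_le h h'.
    by rewrite u0 subrr.

rewrite ltr0_norm // maxEle oppr_ge0 (ltW h) add0r //.
Qed.
End P7.
Section P8.
Variable R : realType.

Lemma sq_diff_bound (a P d : R) : `|a| <= 1 -> `|P - a| <= d -> d <= 1 ->
  `|P ^+ 2 - a ^+ 2| <= 3 * d.
Proof.
move=> ha hP d1.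
have -> : P ^+ 2 - a ^+ 2 = (P - a) * (P - a + 2 * a) by rewrite !expr2; ring.
rewrite normrM.
have h2 : `|P - a + 2 * a| <= 3.
  apply: (le_trans (ler_normD _ _)); rewrite normrM ger0_norm //.
  have : `|P - a| <= 1 by apply: le_trans d1.
  lra.
have hd0 : 0 <= d by apply: le_trans hP.
have := normr_ge0 (P - a); have := normr_ge0 (P - a + 2 * a).
nra.
Qed.

Lemma comp_bound (a P d eta r : R) : `|a| <= 1 -> `|P - a| <= d ->
  `|1 - r| <= eta -> 1 / 2 <= r -> `|P / r - a| <= 2 * (d + eta).
Proof.
move=> ha hP hr r2.
have r0 : 0 < r by apply: lt_le_trans r2; lra.
have -> : P / r - a = ((P - a) + a * (1 - r)) / r by field; rewrite gt_eqF.
rewrite normrM normfV (gtr0_norm r0).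
have h1 : `|(P - a) + a * (1 - r)| <= d + eta.
  apply: (le_trans (ler_normD _ _)); rewrite normrM.
  have := normr_ge0 a; have := normr_ge0 (1 - r); nra.
rewrite ler_pdivrMr //.
have := normr_ge0 (P - a + a * (1 - r)); nra.
Qed.
End P8.
Section P9.
Variable R : realType.

Lemma final_est N (a b P Q : 'I_N -> R) (x eps d : R) :
  (0 < N)%N ->
  \sum_(j < N) (a j ^+ 2 + b j ^+ 2) = 1 ->
  (forall j, `|P j - a j| <= d) -> (forall j, `|Q j - b j| <= d) ->
  d <= 1 -> 6 * N%:R * d <= 1 / 2 -> 6 * N%:R * d <= 1 - x -> 0 < eps ->
  8 * N%:R * ((6 * N%:R + 1) * d) <= eps ->
  0 < \sum_(j < N) (P j ^+ 2 + Q j ^+ 2) /\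
  x <= \sum_(j < N) (P j ^+ 2 + Q j ^+ 2) /\
  \sum_(j < N) ((P j / Num.sqrt (\sum_(j < N) (P j ^+ 2 + Q j ^+ 2)) - a j) ^+ 2
     + (Q j / Num.sqrt (\sum_(j < N) (P j ^+ 2 + Q j ^+ 2)) - b j) ^+ 2) < eps ^+ 2.
Proof.
move=> N0 hab hP hQ d1 hd2 hdx e0 hde.
set S := \sum_(j < N) (P j ^+ 2 + Q j ^+ 2).
have d0 : 0 <= d by have := hP (Ordinal N0); apply: le_trans.
have Nge1 : 1 <= N%:R :> R by rewrite ler1n.
have hab1 : forall j, `|a j| <= 1 /\ `|b j| <= 1.
  move=> j; have : a j ^+ 2 + b j ^+ 2 <= 1.
    rewrite -hab (bigD1 j) //= lerDl sumr_ge0 // => k _.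
    by rewrite addr_ge0 // sqr_ge0.
  move=> h; have := sqr_ge0 (b j); have := sqr_ge0 (a j) => ha hb.
  by split; rewrite ler_norml; apply/andP; split; nra.
set eta := 6 * N%:R * d in hd2 hdx *.
have hS : `|S - 1| <= eta.
  rewrite -hab /S -sumrB.
  apply: (le_trans (ler_norm_sum _ _ _)).
  have -> : eta = \sum_(j < N) (6 * d).
    by rewrite sumr_const card_ord -mulr_natr /eta; ring.
  apply: ler_sum => j _.
  have -> : P j ^+ 2 + Q j ^+ 2 - (a j ^+ 2 + b j ^+ 2) =
            (P j ^+ 2 - a j ^+ 2) + (Q j ^+ 2 - b j ^+ 2) by ring.
  apply: (le_trans (ler_normD _ _)).
  have [ha hb] := hab1 j.
  have := sq_diff_bound ha (hP j) d1; have := sq_diff_bound hb (hQ j) d1.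
  lra.
have [hS1 hS2] : 1 - eta <= S /\ S <= 1 + eta.
  by move: hS; rewrite ler_norml => /andP[h1 h2]; split; lra.
have S0 : 0 < S by lra.
split => //; split; first lra.
set r := Num.sqrt S.
have r0 : 0 <= r := sqrtr_ge0 S.
have rr : r ^+ 2 = S by rewrite sqr_sqrtr // ltW.
have S12 : 1 / 2 <= S by lra.
have r2 : 1 / 2 <= r.
  rewrite leNgt; apply/negP => hlt.
  have : r * r < 1 / 2 * (1 / 2) by apply: ltr_pM.
  rewrite -expr2 rr; lra.
have hr : `|1 - r| <= eta.
  have e : `|1 - r| * (1 + r) = `|S - 1|.
    rewrite -[1 + r]ger0_norm; last lra.
    by rewrite -normrM -normrN; congr `|_|; rewrite -rr; ring.
  apply: le_trans hS; rewrite -e ler_peMr //; lra.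
have hc : forall j, (P j / r - a j) ^+ 2 + (Q j / r - b j) ^+ 2
    <= 2 * (2 * (d + eta)) ^+ 2.
  move=> j; have [ha hb] := hab1 j.
  have h1 := comp_bound ha (hP j) hr r2.
  have h2 := comp_bound hb (hQ j) hr r2.
  have hde0 : 0 <= 2 * (d + eta) by lra.
  have e1 : (P j / r - a j) ^+ 2 <= (2 * (d + eta)) ^+ 2.
    by rewrite -real_normK ?num_real // lerXn2r // nnegrE.
  have e2 : (Q j / r - b j) ^+ 2 <= (2 * (d + eta)) ^+ 2.
    by rewrite -real_normK ?num_real // lerXn2r // nnegrE.
  lra.
apply: (le_lt_trans (ler_sum _ (fun j _ => hc j))).
rewrite sumr_const card_ord -[X in X < _]mulr_natr.
have eq : d + eta = (6 * N%:R + 1) * d by rewrite /eta; ring.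
rewrite eq.
set q := (6 * N%:R + 1) * d in hde *.
have q0 : 0 <= q by rewrite /q mulr_ge0 //; lra.
have hq8 : 8 * q <= eps.
  apply: le_trans hde.
  have : 0 <= q * (N%:R - 1) by rewrite mulr_ge0 // subr_ge0.
  lra.
have h1 : 8 * N%:R * q * q <= eps * q by rewrite ler_wpM2r.
have h2 : eps * q <= eps * (eps / 8) by rewrite ler_wpM2l ?(ltW e0) // ler_pdivlMr //; lra.
have h3 : eps * (eps / 8) < eps ^+ 2 by rewrite expr2 ltr_pM2l // ltr_pdivrMr //; lra.
have -> : 2 * (2 * q) ^+ 2 * N%:R = 8 * N%:R * q * q by ring.
lra.
Qed.
End P9.
Section P10.
Variable R : realType.

Lemma rnorm_le_Dsum K (t c : 'rV[R]_K) : rnorm (t - c) <= Dsum c t.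
Proof.
rewrite /rnorm /Dsum.
set S := \sum_(k < K) `|t 0 k - c 0 k|.
have S0 : 0 <= S by apply: sumr_ge0 => k _.
rewrite -(ger0_norm S0) -sqrtr_sqr ler_sqrt ?sqr_ge0 //.
rewrite [X in _ <= X]expr2 {2}/S mulr_sumr; apply: ler_sum => k _.
rewrite !mxE -real_normK ?num_real // expr2 [S * _]mulrC ler_wpM2l //.
by rewrite /S (bigD1 k) //= lerDl sumr_ge0.
Qed.

Lemma Edens_D (s : R) K (c t : 'rV[R]_K) : 0 < s ->
  Edens s c t * Dsum c t <= 2 / s * Edens (s / 2) c t.
Proof.
move=> s0; rewrite /Edens.
set y := Dsum c t.
have y0 : 0 <= y by apply: sumr_ge0 => k _.
have -> : - (s * y) = - (s / 2 * y) + - (s / 2 * y) by field.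
rewrite expRD.
set e := expR (- (s / 2 * y)).
have e0 : 0 < e := expR_gt0 _.
have hz : s / 2 * y <= expR (s / 2 * y) by have := expR_ge1Dx (s / 2 * y); lra.
have h1 : s / 2 * y * e <= 1.
  by rewrite /e expRN ler_pdivrMr ?expR_gt0 // mul1r.
have h : y * e <= 2 / s.
  rewrite ler_pdivlMr //.
  have -> : y * e * s = 2 * (s / 2 * y * e) by field.
  lra.
rewrite mulrC mulrA; apply: ler_wpM2r => //; first exact: ltW.
Qed.
End P10.
Section P11.
Variable R : realType.

Lemma int_bound K (c : 'rV[R]_K) (s xi a : R) (g : 'rV[R]_K -> R) :
  0 < s -> 0 <= xi ->
  (forall t, `|g t - a| <= xi * Dsum c t) ->
  exists P : R, integral_RK (fun t => (Edens s c t * g t)%:E) = P%:E /\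
     `|P / (2 / s) ^+ K - a| <= 2 * xi / s * 2 ^+ K.
Proof.
move=> s0 xi0 hg.
set k := 2 * xi / s.
have s20 : 0 < s / 2 by rewrite divr_gt0.
have pw : forall t, `|Edens s c t * g t - a * Edens s c t| <= k * Edens (s / 2) c t.
  move=> t.
  have -> : Edens s c t * g t - a * Edens s c t = Edens s c t * (g t - a) by ring.
  rewrite normrM ger0_norm ?expR_ge0 //.
  apply: (le_trans (ler_wpM2l (expR_ge0 _) (hg t))).
  have -> : Edens s c t * (xi * Dsum c t) = xi * (Edens s c t * Dsum c t) by ring.
  have -> : k * Edens (s / 2) c t = xi * (2 / s * Edens (s / 2) c t).
    by rewrite /k; field; rewrite gt_eqF.
  by rewrite ler_wpM2l // Edens_D.
have lo : forall t, ((a * Edens s c t + (- k) * Edens (s / 2) c t)%:E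
   <= (Edens s c t * g t)%:E)%E.
  move=> t; rewrite lee_fin; have := pw t; rewrite ler_norml => /andP[h1 h2]; lra.
have hi : forall t, ((Edens s c t * g t)%:E <=
   (a * Edens s c t + k * Edens (s / 2) c t)%:E)%E.
  move=> t; rewrite lee_fin; have := pw t; rewrite ler_norml => /andP[h1 h2]; lra.
have Ilo := integral_RK_le lo.
have Ihi := integral_RK_le hi.
rewrite !integral_RK_exp2 // in Ilo Ihi.
move: Ilo Ihi.
case: (integral_RK _) => [r| |] //= Ilo Ihi.
exists r; split => //.
rewrite lee_fin in Ilo; rewrite lee_fin in Ihi.
have N0 : 0 < (2 / s) ^+ K by rewrite exprn_gt0 // divr_gt0.
have e4 : (2 / (s / 2)) ^+ K = 2 ^+ K * (2 / s) ^+ K.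
  by rewrite -exprMn; congr (_ ^+ _); field; rewrite gt_eqF.
rewrite e4 in Ilo Ihi.
have -> : r / (2 / s) ^+ K - a = (r - a * (2 / s) ^+ K) / (2 / s) ^+ K.
  by field; rewrite gt_eqF.
rewrite normrM normfV (gtr0_norm N0) ler_pdivrMr // ler_norml.
apply/andP; split; lra.
Qed.
End P11.
Section P12.
Variable R : realType.
Local Notation C := R[i].

Lemma Re_sum N (F : 'I_N -> C) : complex.Re (\sum_(i < N) F i) = \sum_(i < N) complex.Re (F i).
Proof. by apply: (big_morph (@complex.Re R)) => // -[a b] [c d]. Qed.

Lemma Im_sum N (F : 'I_N -> C) : complex.Im (\sum_(i < N) F i) = \sum_(i < N) complex.Im (F i).
Proof. by apply: (big_morph (@complex.Im R)) => // -[a b] [c d]. Qed.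

Lemma cmod2 (z : C) : cmod z ^+ 2 = complex.Re z ^+ 2 + complex.Im z ^+ 2.
Proof. by rewrite /cmod sqr_sqrtr // addr_ge0 // sqr_ge0. Qed.

Lemma cmod_ge0 (z : C) : 0 <= cmod z.
Proof. exact: sqrtr_ge0. Qed.

Lemma Re_le_cmod (z : C) : `|complex.Re z| <= cmod z.
Proof.
rewrite -(sqrtr_sqr (complex.Re z)) /cmod ler_sqrt ?sqr_ge0 ?addr_ge0 ?sqr_ge0 //.
by rewrite lerDl sqr_ge0.
Qed.

Lemma Im_le_cmod (z : C) : `|complex.Im z| <= cmod z.
Proof.
rewrite -(sqrtr_sqr (complex.Im z)) /cmod ler_sqrt ?sqr_ge0 ?addr_ge0 ?sqr_ge0 //.
by rewrite lerDr sqr_ge0.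
Qed.

Lemma hnorm2 N (v : 'cV[C]_N) :
  hnorm v ^+ 2 = \sum_(j < N) (complex.Re (v j 0) ^+ 2 + complex.Im (v j 0) ^+ 2).
Proof.
rewrite /hnorm sqr_sqrtr; last by apply: sumr_ge0 => j _; exact: sqr_ge0.
by apply: eq_bigr => j _; rewrite cmod2.
Qed.

Lemma cmod_le_hnorm N (v : 'cV[C]_N) j : cmod (v j 0) <= hnorm v.
Proof.
rewrite -(ger0_norm (cmod_ge0 (v j 0))) -sqrtr_sqr /hnorm ler_sqrt ?sqr_ge0 //.
  by rewrite (bigD1 j) //= lerDl; apply: sumr_ge0 => k _; exact: sqr_ge0.
by apply: sumr_ge0 => k _; exact: sqr_ge0.
Qed.

Lemma ReRM (x : R) (z : C) : complex.Re ((x%:C)%C * z) = x * complex.Re z.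
Proof. by case: z => a b /=; rewrite mul0r subr0. Qed.

Lemma ImRM (x : R) (z : C) : complex.Im ((x%:C)%C * z) = x * complex.Im z.
Proof. by case: z => a b /=; rewrite mul0r addr0. Qed.

Lemma ReB (z w : C) : complex.Re (z - w) = complex.Re z - complex.Re w.
Proof. by case: z; case: w. Qed.

Lemma ImB (z w : C) : complex.Im (z - w) = complex.Im z - complex.Im w.
Proof. by case: z; case: w. Qed.

Lemma unitary_col N (M : 'M[C]_N) (i : 'I_N) : unitary M ->
  \sum_(j < N) (complex.Re (M j i) ^+ 2 + complex.Im (M j i) ^+ 2) = 1.
Proof.
move=> /matrixP /(_ i i); rewrite !mxE eqxx /= => h.
have := congr1 (@complex.Re R) h; rewrite Re_sum /= => <-.
by apply: eq_bigr => j _; rewrite mxE; case: (M j i) => a b /=; rewrite mulNr opprK !expr2.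
Qed.
End P12.
Section P13.
Variable R : realType.

Definition netw K L : 'M[R]_(L, K) :=
  \matrix_(l < L, k < K) (((l : nat) == k)%:R - ((l : nat) == K + k)%:R).

Definition mkp K L (c : 'rV[R]_K) (s : R) : netparam R K L :=
  NetParam (netw K L) (- (netw K L *m c^T)) (const_mx s) 0 0 0.

Lemma netA_mkp K L (c t : 'rV[R]_K) (s : R) : (2 * K <= L)%N ->
  netA (mkp L c s) t = s * Dsum c t.
Proof.
move=> HL; rewrite /netA /outA /hidden /= addr0.
transitivity (\sum_(l < L) s * relu (dnet (t - c) l)).
  apply: eq_bigr => l _; rewrite !mxE; congr (_ * relu _).
  rewrite /dnet -sumrN -big_split /=; apply: eq_bigr => k _.
  by rewrite !mxE mulrBr.
by rewrite -mulr_sumr sum_relu_dnet //; congr (_ * _); apply: eq_bigr => k _; rewrite !mxE.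
Qed.

Lemma netB_mkp K L (c t : 'rV[R]_K) (s : R) : netB (mkp L c s) t = 0.
Proof.
by rewrite /netB /outA /= addr0 big1 // => l _; rewrite mxE mul0r.
Qed.
End P13.
Unset Implicit Arguments.
Theorem theorem3 (R : realType) (n K L : nat)
  (U : 'rV[R]_K -> 'M[R[i]]_(2 ^ n))
  (U_unitary : forall theta, unitary (U theta))
  (U_diff : forall theta (a b : 'I_(2 ^ n)),
     differentiable (fun t => complex.Re (U t a b)) theta /\
     differentiable (fun t => complex.Im (U t a b)) theta)
  (xi : R) (xi_gt0 : 0 < xi)
  (grad_bound : forall (theta nv : 'rV[R]_K), rnorm nv = 1 ->
     hnorm (ddir (fun t => U t *m @ket0 R n) nv theta) <= xi)
  (HL : (2 * K <= L)%N) :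
  forall (theta : 'rV[R]_K) (x : R), x < 1 ->
  forall eps : R, 0 < eps ->
  exists p : netparam R K L,
    in_Vx (fun t => U t *m @ket0 R n) x p /\
    hnorm (psin (fun t => U t *m @ket0 R n) p - U theta *m @ket0 R n) < eps.
Proof.
move=> c x x1 eps e0.
set phi := fun t => U t *m @ket0 R n.
have M0 : (0 < 2 ^ n)%N by rewrite expn_gt0.
pose i0 : 'I_(2 ^ n) := Ordinal M0.
have phiE : forall t j, phi t j 0 = U t j i0.
  move=> t j; rewrite /phi mxE (bigD1 i0) //= /ket0 mxE eqxx mulr1 big1 ?addr0 //.
  move=> k ki; rewrite mxE.
  have -> : ((k : nat) == 0%N) = false.
    by apply/negbTE; move: ki; apply: contra => /eqP k0; apply/eqP/val_inj.
  by rewrite mulr0.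
have Lip : forall j t,
    `|complex.Re (phi t j 0) - complex.Re (phi c j 0)| <= xi * Dsum c t /\
    `|complex.Im (phi t j 0) - complex.Im (phi c j 0)| <= xi * Dsum c t.
  move=> j t.
  have dRe : forall y, differentiable (fun t => complex.Re (phi t j 0)) y.
    move=> y; have -> : (fun t => complex.Re (phi t j 0)) = (fun t => complex.Re (U t j i0)).
      by apply/funext => t'; rewrite phiE.
    exact: (U_diff y j i0).1.
  have dIm : forall y, differentiable (fun t => complex.Im (phi t j 0)) y.
    move=> y; have -> : (fun t => complex.Im (phi t j 0)) = (fun t => complex.Im (U t j i0)).
      by apply/funext => t'; rewrite phiE.
    exact: (U_diff y j i0).2.
  have bRe : forall y nv, rnorm nv = 1 -> `|'D_nv (fun t => complex.Re (phi t j 0)) y| <= xi.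
    move=> y nv nv1; apply: (le_trans _ (grad_bound y nv nv1)).
    apply: (le_trans _ (cmod_le_hnorm _ j)).
    by apply: (le_trans _ (Re_le_cmod _)); rewrite mxE.
  have bIm : forall y nv, rnorm nv = 1 -> `|'D_nv (fun t => complex.Im (phi t j 0)) y| <= xi.
    move=> y nv nv1; apply: (le_trans _ (grad_bound y nv nv1)).
    apply: (le_trans _ (cmod_le_hnorm _ j)).
    by apply: (le_trans _ (Im_le_cmod _)); rewrite mxE.
  have hD : xi * rnorm (t - c) <= xi * Dsum c t.
    by rewrite ler_wpM2l ?(ltW xi_gt0) // rnorm_le_Dsum.
  split.
  - exact: le_trans (lipschitz_dir dRe bRe t c) hD.
  - exact: le_trans (lipschitz_dir dIm bIm t c) hD.
set M : R := (2 ^ n)%:R.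
have Mpos : 0 < M by rewrite /M ltr0n.
set d0 := Num.min (Num.min (1 / (12 * M)) ((1 - x) / (6 * M))) (eps / (8 * M * (6 * M + 1))).
have d0pos : 0 < d0.
  rewrite /d0 !lt_min; apply/andP; split; first (apply/andP; split).
  - by rewrite divr_gt0 // mulr_gt0.
  - by rewrite divr_gt0 ?subr_gt0 // mulr_gt0.
  - by rewrite divr_gt0 // !mulr_gt0 // addr_gt0 // mulr_gt0.
have : d0 <= d0 := lexx d0.
rewrite {2}/d0 !le_min => /andP[/andP[da db] dc].
set s := 2 * xi * 2 ^+ K / d0.
have s0 : 0 < s by rewrite /s divr_gt0 // !mulr_gt0 // exprn_gt0.
have sd : 2 * xi / s * 2 ^+ K = d0.
  rewrite /s; field.
  by rewrite !gt_eqF // ?exprn_gt0 //; apply/andP; split => //; rewrite gt_eqF.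
exists (mkp L c s).
set p := mkp L c s.
have alphaE : forall t, alpha p t = ((Edens s c t)%:C)%C.
  move=> t; rewrite /alpha /p netA_mkp // netB_mkp cos0 sin0.
  by rewrite (_ : (1 +i* 0)%C = 1) // !mulr1.
have normE : normconst p = ((2 / s) ^+ K)%:E.
  rewrite /normconst.
  have -> : (fun t => (cmod (alpha p t))%:E) =
            (fun t => (1 * Edens s c t + 0 * Edens s c t)%:E).
    apply/funext => t; rewrite alphaE; congr EFin.
    rewrite /cmod /= [0 ^+ 2]expr2 mul0r addr0 sqrtr_sqr ger0_norm ?expR_ge0 //.
    by rewrite mul1r mul0r addr0.
  by rewrite integral_RK_exp2 // mul1r mul0r addr0.
set Pf := fun j => fine (integral_RK (fun t => (complex.Re (alpha p t * phi t j 0))%:E)).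
set Qf := fun j => fine (integral_RK (fun t => (complex.Im (alpha p t * phi t j 0))%:E)).
have hP : forall j, `|Pf j / (2 / s) ^+ K - complex.Re (phi c j 0)| <= d0.
  move=> j.
  have [P [h1 h2]] := int_bound (c := c) (g := fun t => complex.Re (phi t j 0))
     (a := complex.Re (phi c j 0)) s0 (ltW xi_gt0) (fun t => (Lip j t).1).
  have -> : Pf j = P.
    rewrite /Pf -[P]/(fine P%:E) -h1; congr (fine (integral_RK _)).
    by apply/funext => t; rewrite alphaE ReRM.
  by rewrite -sd.
have hQ : forall j, `|Qf j / (2 / s) ^+ K - complex.Im (phi c j 0)| <= d0.
  move=> j.
  have [P [h1 h2]] := int_bound (c := c) (g := fun t => complex.Im (phi t j 0))
     (a := complex.Im (phi c j 0)) s0 (ltW xi_gt0) (fun t => (Lip j t).2).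
  have -> : Qf j = P.
    rewrite /Qf -[P]/(fine P%:E) -h1; congr (fine (integral_RK _)).
    by apply/funext => t; rewrite alphaE ImRM.
  by rewrite -sd.
have psiRe : forall j, complex.Re (psi phi p j 0) = Pf j / (2 / s) ^+ K.
  by move=> j; rewrite /psi mxE ReRM normE /= mulrC.
have psiIm : forall j, complex.Im (psi phi p j 0) = Qf j / (2 / s) ^+ K.
  by move=> j; rewrite /psi mxE ImRM normE /= mulrC.
have hab : \sum_(j < 2 ^ n) (complex.Re (phi c j 0) ^+ 2 + complex.Im (phi c j 0) ^+ 2) = 1.
  rewrite -(unitary_col i0 (U_unitary c)); apply: eq_bigr => j _; by rewrite phiE.
have hP' : forall j, `|complex.Re (psi phi p j 0) - complex.Re (phi c j 0)| <= d0.
  by move=> j; rewrite psiRe.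
have hQ' : forall j, `|complex.Im (psi phi p j 0) - complex.Im (phi c j 0)| <= d0.
  by move=> j; rewrite psiIm.
have h1 : d0 <= 1.
  apply: (le_trans da); rewrite ler_pdivrMr ?mulr_gt0 // mul1r.
  have : 1 <= M by rewrite /M ler1n.
  lra.
have h2 : 6 * M * d0 <= 1 / 2.
  have := ler_wpM2l (_ : 0 <= 6 * M) da; rewrite (_ : 6 * M * (1 / (12 * M)) = 1 / 2).
    by apply; lra.
  by field; rewrite gt_eqF.
have h3 : 6 * M * d0 <= 1 - x.
  have := ler_wpM2l (_ : 0 <= 6 * M) db; rewrite (_ : 6 * M * ((1 - x) / (6 * M)) = 1 - x).
    by apply; lra.
  by field; rewrite gt_eqF.
have h4 : 8 * M * ((6 * M + 1) * d0) <= eps.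
  have := ler_wpM2l (_ : 0 <= 8 * M * (6 * M + 1)) dc.
  rewrite (_ : 8 * M * (6 * M + 1) * (eps / (8 * M * (6 * M + 1))) = eps).
    by rewrite mulrA; apply; apply: mulr_ge0; lra.
  by field; rewrite !gt_eqF //; lra.
have [S0 [Sx Sfin]] := final_est M0 hab hP' hQ' h1 h2 h3 e0 h4.
have E1 : expect1 phi p = \sum_(j < 2 ^ n)
    (complex.Re (psi phi p j 0) ^+ 2 + complex.Im (psi phi p j 0) ^+ 2).
  by rewrite /expect1 hnorm2.
split.
  split; first by rewrite normE ltry andbT lte_fin exprn_gt0 // divr_gt0.
  by rewrite E1; split.
rewrite /hnorm -(ger0_norm (ltW e0)) -sqrtr_sqr ltr_sqrt ?exprn_gt0 //.
apply: le_lt_trans Sfin; rewrite le_eqVlt; apply/orP; left; apply/eqP.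
apply: eq_bigr => j _; rewrite cmod2 !mxE ReB ImB ReRM ImRM -E1 -/phi.
by rewrite ![_^-1 * _]mulrC.
Qed.
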